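(* Let $(\mathcal C,\otimes,I)$ be a monoidal category and $M$ a strong monad on $\mathcal C$ with strength $\tau$. Assume that for every object $A$ the algebraically free monad $T_A=(G_A)^*$ of the strong endofunctor $G_A X = A\otimes MX$ exists and is strongly generated. Then the forgetful functor $U:\mathbf{EMMon}_M\to\mathcal C$ has a left adjoint $F:\mathcal C\to\mathbf{EMMon}_M$ given by $FA=\langle M T_A I,\ \mu^M_{T_A I},\ \mathfrak m,\ \mathfrak u\rangle$ and $Ff = M t_f$ for $f:A\to B$, where $\mathfrak m$, $\mathfrak u$ and $t_f$ are as described in the context.
   Context: Structural isomorphisms of the monoidal category are written $\cong$. A strong monad $M$ has a strength $\tau_{A,B}: MA\otimes B\to M(A\otimes B)$, natural and compatible with unitor, associator, $\eta$ and $\mu$ (i.e. $\tau\circ(\eta\otimes\mathrm{id})=\eta$, $\tau\circ(\mu\otimes\mathrm{id})=\mu\circ M\tau\circ\tau$). A monoid is $\langle A, m: A\otimes A\to A, u: I\to A\rangle$ with the usual laws. An Eilenberg--Moore $M$-monoid is $\langle A, a: MA\to A, m, u\rangle$ with $\langle A,a\rangle$ an Eilenberg--Moore $M$-algebra, $\langle A,m,u\rangle$ a monoid, and $m\circ(a\otimes\mathrm{id}_A)=a\circ Mm\circ\tau_{A,A}$. Morphisms are $\mathcal C$-morphisms that are both $M$-algebra and monoid morphisms; this is the category $\mathbf{EMMon}_M$, and $U\langle A,a,m,u\rangle=A$. For an endofunctor $G$, the algebraically free monad $G^*$ exists if the forgetful functor from $G$-algebras $\langle C, c: GC\to C\rangle$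 to $\mathcal C$ has a left adjoint; the free algebra on $X$ is $\langle G^*X,\mathsf{cons}_X: GG^*X\to G^*X\rangle$ with unit $\eta^{\mathcal F}_X$. For strong $G$ (strength $\tau^G$), $G^*$ is strongly generated if for every $f: X\otimes Y\to C$ and $G$-algebra $\langle C,c\rangle$ there is a unique $\widehat f: G^*X\otimes Y\to C$ with $\widehat f\circ(\eta^{\mathcal F}\otimes\mathrm{id})=f$ and $\widehat f\circ(\mathsf{cons}\otimes\mathrm{id})=c\circ G\widehat f\circ \tau^G$; then $G^*$ has strength $\widetilde\tau_{X,Y}=\widehat f$ for $f=\eta^{\mathcal F}_{X\otimes Y}$ and the algebra $\langle G^*(X\otimes Y),\mathsf{cons}\rangle$. $G_A X=A\otimes MX$ is strong via $(A\otimes MX)\otimes Y\xrightarrow{\cong}A\otimes(MX\otimes Y)\xrightarrow{\mathrm{id}\otimes\tau}A\otimes M(X\otimes Y)$. Resumption monad $R_A X = M T_A X$: unit $\eta^R=\eta^M\circ\eta^{\mathcal F}$; for $f: X\to R_AY$, let $k: T_AX\to R_AY$ be the unique $G_A$-algebra morphism from $\langle T_AX,\mathsf{cons}_X\rangle$ to $\langle R_AY,\ \eta^M_{T_AY}\circ\mathsf{cons}_Y\circ(\mathrm{id}_A\otimes \mu^M_{T_AY})\rangle$ with $k\circ\eta^{\mathcal F}_X=f$, and set $f^\#=\mu^M_{T_AY}\circ Mk$; multiplication $\mu^R_X=(\mathrm{id}_{R_AX})^\#$. Strength $\tau^R_{X,Y}=M\widetilde\tau_{X,Y}\circ\tau_{T_AX,Y}$.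 Then $\mathfrak u=\eta^R_I: I\to R_AI$ and $\mathfrak m = \mu^R_I\circ R_A(\cong)\circ\tau^R_{I,R_AI}: R_AI\otimes R_AI\to R_A(I\otimes R_AI)\to R_AR_AI\to R_AI$. For $f:A\to B$, $t_f: T_AI\to T_BI$ is the unique $G_A$-algebra morphism from $\langle T_AI,\mathsf{cons}\rangle$ to $\langle T_BI,\ \mathsf{cons}\circ(f\otimes\mathrm{id})\rangle$ with $t_f\circ\eta^{\mathcal F}_I=\eta^{\mathcal F}_I$. *)

(* Defs.v *)
From Stdlib Require Import ClassicalEpsilon.

Set Implicit Arguments.
Unset Strict Implicit.

Record Cat := {
  ob :> Type;
  hom : ob -> ob -> Type;
  idm : forall A : ob, hom A A;
  comp : forall A B D : ob, hom B D -> hom A B -> hom A D;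
  comp_idl : forall A B (f : hom A B), comp (idm B) f = f;
  comp_idr : forall A B (f : hom A B), comp f (idm A) = f;
  comp_assoc : forall A B D E (f : hom A B) (g : hom B D) (h : hom D E),
      comp h (comp g f) = comp (comp h g) f
}.
Arguments hom {c} _ _.
Arguments idm {c} _.
Arguments comp {c A B D} _ _.

Declare Scope cat_scope.
Open Scope cat_scope.
Notation "g ∘ f" := (comp g f) (at level 40, left associativity) : cat_scope.

Record Monoidal (C : Cat) := {
  tens : C -> C -> C;
  tensm : forall A A' B B' : C, hom A A' -> hom B B' -> hom (tens A B) (tens A' B');
  unitI : C;
  tensm_id : forall A B : C, tensm (idm A) (idm B) = idm (tens A B);
  tensm_comp : forall A A' A'' B B' B'' (f : hom A A') (f' : hom A' A'')
      (g : hom B B') (g' : hom B' B''),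
      tensm (f' ∘ f) (g' ∘ g) = tensm f' g' ∘ tensm f g;
  alpha : forall A B D : C, hom (tens (tens A B) D) (tens A (tens B D));
  alpha_inv : forall A B D : C, hom (tens A (tens B D)) (tens (tens A B) D);
  alpha_iso1 : forall A B D, alpha A B D ∘ alpha_inv A B D = idm _;
  alpha_iso2 : forall A B D, alpha_inv A B D ∘ alpha A B D = idm _;
  alpha_nat : forall A A' B B' D D' (f : hom A A') (g : hom B B') (h : hom D D'),
      alpha A' B' D' ∘ tensm (tensm f g) h = tensm f (tensm g h) ∘ alpha A B D;
  lam : forall A : C, hom (tens unitI A) A;
  lam_inv : forall A : C, hom A (tens unitI A);
  lam_iso1 : forall A, lam A ∘ lam_inv A = idm _;
  lam_iso2 : forall A, lam_inv A ∘ lam A = idm _;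
  lam_nat : forall A A' (f : hom A A'), lam A' ∘ tensm (idm unitI) f = f ∘ lam A;
  rho : forall A : C, hom (tens A unitI) A;
  rho_inv : forall A : C, hom A (tens A unitI);
  rho_iso1 : forall A, rho A ∘ rho_inv A = idm _;
  rho_iso2 : forall A, rho_inv A ∘ rho A = idm _;
  rho_nat : forall A A' (f : hom A A'), rho A' ∘ tensm f (idm unitI) = f ∘ rho A;
  pentagon : forall A B D E,
      alpha A B (tens D E) ∘ alpha (tens A B) D E
      = tensm (idm A) (alpha B D E) ∘ alpha A (tens B D) E ∘ tensm (alpha A B D) (idm E);
  triangle : forall A B,
      tensm (idm A) (lam B) ∘ alpha A unitI B = tensm (rho A) (idm B)
}.
Arguments tens {C} m _ _.
Arguments tensm {C} m {A A' B B'} _ _.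
Arguments unitI {C} m.
Arguments alpha {C} m A B D.
Arguments lam {C} m A.
Arguments rho {C} m A.

Record StrongMonad (C : Cat) (MC : Monoidal C) := {
  Mo : C -> C;
  Mm : forall A B : C, hom A B -> hom (Mo A) (Mo B);
  Mm_id : forall A : C, Mm (idm A) = idm (Mo A);
  Mm_comp : forall A B D (f : hom A B) (g : hom B D), Mm (g ∘ f) = Mm g ∘ Mm f;
  eta : forall A : C, hom A (Mo A);
  mu : forall A : C, hom (Mo (Mo A)) (Mo A);
  eta_nat : forall A B (f : hom A B), Mm f ∘ eta A = eta B ∘ f;
  mu_nat : forall A B (f : hom A B), Mm f ∘ mu A = mu B ∘ Mm (Mm f);
  mu_assoc : forall A, mu A ∘ Mm (mu A) = mu A ∘ mu (Mo A);
  mu_eta_l : forall A, mu A ∘ eta (Mo A) = idm (Mo A);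
  mu_eta_r : forall A, mu A ∘ Mm (eta A) = idm (Mo A);
  tau : forall A B : C, hom (tens MC (Mo A) B) (Mo (tens MC A B));
  tau_nat : forall A A' B B' (f : hom A A') (g : hom B B'),
      Mm (tensm MC f g) ∘ tau A B = tau A' B' ∘ tensm MC (Mm f) g;
  tau_unit : forall A, Mm (rho MC A) ∘ tau A (unitI MC) = rho MC (Mo A);
  tau_assoc : forall A B D,
      tau A (tens MC B D) ∘ alpha MC (Mo A) B D
      = Mm (alpha MC A B D) ∘ tau (tens MC A B) D ∘ tensm MC (tau A B) (idm D);
  tau_eta : forall A B, tau A B ∘ tensm MC (eta A) (idm B) = eta (tens MC A B);
  tau_mu : forall A B,
      tau A B ∘ tensm MC (mu A) (idm B) = mu (tens MC A B) ∘ Mm (tau A B) ∘ tau (Mo A) B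
}.
Arguments Mo {C MC} s _.
Arguments Mm {C MC} s {A B} _.
Arguments eta {C MC} s A.
Arguments mu {C MC} s A.
Arguments tau {C MC} s A B.

Unset Implicit Arguments.
Section Theory.
Context {C : Cat} {MC : Monoidal C} (M : StrongMonad MC).

Local Notation "A ⊗ B" := (tens MC A B) (at level 35).
Local Notation "f ⊠ g" := (tensm MC f g) (at level 35).
Local Notation I := (unitI MC).

Definition GA_str (A X Y : C) : hom ((A ⊗ Mo M X) ⊗ Y) (A ⊗ Mo M (X ⊗ Y)) :=
  (idm A ⊠ tau M X Y) ∘ alpha MC A (Mo M X) Y.

(* For every A, the free G_A-algebra on X is <T A X, cons A X> with unit etaF A X
   (i.e. the algebraically free monad T_A = (G_A)^* exists). *)
Definition AlgFree (T : C -> C -> C)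
    (cons : forall A X : C, hom (A ⊗ Mo M (T A X)) (T A X))
    (etaF : forall A X : C, hom X (T A X)) : Prop :=
  forall (A X D : C) (c : hom (A ⊗ Mo M D) D) (f : hom X D),
    exists! h : hom (T A X) D,
      h ∘ etaF A X = f /\ h ∘ cons A X = c ∘ (idm A ⊠ Mm M h).

Definition StronglyGenerated (T : C -> C -> C)
    (cons : forall A X : C, hom (A ⊗ Mo M (T A X)) (T A X))
    (etaF : forall A X : C, hom X (T A X)) : Prop :=
  forall (A X Y D : C) (c : hom (A ⊗ Mo M D) D) (f : hom (X ⊗ Y) D),
    exists! h : hom (T A X ⊗ Y) D,
      h ∘ (etaF A X ⊠ idm Y) = f /\
      h ∘ (cons A X ⊠ idm Y) = c ∘ (idm A ⊠ Mm M h) ∘ GA_str A (T A X) Y.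

Definition is_EMMonoid (X : C) (a : hom (Mo M X) X) (m : hom (X ⊗ X) X)
    (u : hom I X) : Prop :=
  a ∘ eta M X = idm X /\ a ∘ Mm M a = a ∘ mu M X /\
  m ∘ (m ⊠ idm X) = m ∘ (idm X ⊠ m) ∘ alpha MC X X X /\
  m ∘ (u ⊠ idm X) = lam MC X /\ m ∘ (idm X ⊠ u) = rho MC X /\
  m ∘ (a ⊠ idm X) = a ∘ Mm M m ∘ tau M X X.

Definition is_EMMon_hom (X : C) (a : hom (Mo M X) X) (m : hom (X ⊗ X) X) (u : hom I X)
    (Y : C) (b : hom (Mo M Y) Y) (n : hom (Y ⊗ Y) Y) (v : hom I Y) (h : hom X Y) : Prop :=
  h ∘ a = b ∘ Mm M h /\ h ∘ m = n ∘ (h ⊠ h) /\ h ∘ u = v.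

(* The forgetful functor U : EMMon_M -> C has a left adjoint F whose object
   part is A |-> <Fo A, Fa A, Fm A, Fu A> and whose morphism part is Fh. *)
Definition LeftAdjointToU (Fo : C -> C) (Fa : forall A, hom (Mo M (Fo A)) (Fo A))
    (Fm : forall A, hom (Fo A ⊗ Fo A) (Fo A)) (Fu : forall A, hom I (Fo A))
    (Fh : forall A B : C, hom A B -> hom (Fo A) (Fo B)) : Prop :=
  (forall A, is_EMMonoid (Fo A) (Fa A) (Fm A) (Fu A)) /\
  (forall A B (f : hom A B),
      is_EMMon_hom (Fo A) (Fa A) (Fm A) (Fu A) (Fo B) (Fa B) (Fm B) (Fu B) (Fh A B f)) /\
  (forall A, Fh A A (idm A) = idm (Fo A)) /\
  (forall A B D (f : hom A B) (g : hom B D), Fh A D (g ∘ f) = Fh B D g ∘ Fh A B f) /\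
  exists unit : forall A, hom A (Fo A),
    (forall A B (f : hom A B), Fh A B f ∘ unit A = unit B ∘ f) /\
    (forall (A Y : C) (b : hom (Mo M Y) Y) (n : hom (Y ⊗ Y) Y) (v : hom I Y),
        is_EMMonoid Y b n v ->
        forall g : hom A Y,
          exists! h : hom (Fo A) Y,
            is_EMMon_hom (Fo A) (Fa A) (Fm A) (Fu A) Y b n v h /\ h ∘ unit A = g).

Section Resumption.
Context (T : C -> C -> C)
        (cons : forall A X : C, hom (A ⊗ Mo M (T A X)) (T A X))
        (etaF : forall A X : C, hom X (T A X))
        (Hfree : AlgFree T cons etaF) (Hstr : StronglyGenerated T cons etaF).

Definition free_ext (A X D : C) (c : hom (A ⊗ Mo M D) D) (f : hom X D) : hom (T A X) D :=
  proj1_sig (constructive_indefinite_description _ (Hfree A X D c f)).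

Definition str_ext (A X Y D : C) (c : hom (A ⊗ Mo M D) D) (f : hom (X ⊗ Y) D)
  : hom (T A X ⊗ Y) D :=
  proj1_sig (constructive_indefinite_description _ (Hstr A X Y D c f)).

Definition RA (A X : C) : C := Mo M (T A X).

Definition etaR (A X : C) : hom X (RA A X) := eta M (T A X) ∘ etaF A X.

Definition R_alg (A Y : C) : hom (A ⊗ Mo M (RA A Y)) (RA A Y) :=
  eta M (T A Y) ∘ cons A Y ∘ (idm A ⊠ mu M (T A Y)).

Definition sharp (A X Y : C) (f : hom X (RA A Y)) : hom (RA A X) (RA A Y) :=
  mu M (T A Y) ∘ Mm M (free_ext A X (RA A Y) (R_alg A Y) f).

Definition muR (A X : C) : hom (RA A (RA A X)) (RA A X) := sharp A (RA A X) X (idm (RA A X)).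

Definition Rmap (A X Y : C) (g : hom X Y) : hom (RA A X) (RA A Y) :=
  sharp A X Y (etaR A Y ∘ g).

Definition tauT (A X Y : C) : hom (T A X ⊗ Y) (T A (X ⊗ Y)) :=
  str_ext A X Y (T A (X ⊗ Y)) (cons A (X ⊗ Y)) (etaF A (X ⊗ Y)).

Definition tauR (A X Y : C) : hom (RA A X ⊗ Y) (RA A (X ⊗ Y)) :=
  Mm M (tauT A X Y) ∘ tau M (T A X) Y.

Definition frak_u (A : C) : hom I (RA A I) := etaR A I.

Definition frak_m (A : C) : hom (RA A I ⊗ RA A I) (RA A I) :=
  muR A I ∘ Rmap A (I ⊗ RA A I) (RA A I) (lam MC (RA A I)) ∘ tauR A I (RA A I).

Definition t_f (A B : C) (f : hom A B) : hom (T A I) (T B I) :=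
  free_ext A I (T B I) (cons B I ∘ (f ⊠ idm (Mo M (T B I)))) (etaF B I).

End Resumption.
End Theory.

(* Main.v *)
Require Import Defs.
From Stdlib Require Import ClassicalEpsilon.

Ltac nrm := try unfold RA; repeat rewrite comp_assoc; repeat rewrite comp_idl; repeat rewrite comp_idr.
Ltac nrmH H := try unfold RA in H; repeat rewrite comp_assoc in H; repeat rewrite comp_idl in H; repeat rewrite comp_idr in H.

Ltac inst H := repeat lazymatch type of H with forall x : ?T, _ => let e := fresh in evar (e : T); specialize (H e); subst e end.
Ltac flat X t := lazymatch t with @comp _ _ _ _ ?g ?f => let u := flat X g in constr:(comp u f) | _ => constr:(comp X t) end.
Ltac rw L := try unfold RA;
  let H0 := fresh in pose proof L as H0; inst H0; try unfold RA in H0;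
  first [ rewrite H0; repeat rewrite comp_assoc
  | lazymatch type of H0 with @eq _ ?lhs ?rhs =>
     match goal with |- context [ @comp _ _ _ _ ?X _ ] =>
       let l' := flat X lhs in
       let H := fresh in
       assert (H : l' = comp X rhs) by
         (etransitivity; [| exact (f_equal (@comp _ _ _ _ X) H0)]; repeat rewrite comp_assoc; reflexivity);
       try unfold RA in H; rewrite H; clear H; repeat rewrite comp_assoc
     end end ]; clear H0.
Ltac rwr L := rw (eq_sym L).

Section S.
Context {C : Cat} {MC : Monoidal C} (M : StrongMonad MC).
Local Notation "A ⊗ B" := (tens MC A B) (at level 35).
Local Notation "f ⊠ g" := (tensm MC f g) (at level 35).
Local Notation Iu := (unitI MC).
Local Notation Mf := (Mm M).
Local Notation id := idm.

Lemma tens_lr {A A' B B'} (f : hom A A') (g : hom B B') : f ⊠ g = (f ⊠ id B') ∘ (id A ⊠ g).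
Proof. rewrite <- tensm_comp. nrm. reflexivity. Qed.
Lemma tens_rl {A A' B B'} (f : hom A A') (g : hom B B') : f ⊠ g = (id A' ⊠ g) ∘ (f ⊠ id B).
Proof. rewrite <- tensm_comp. nrm. reflexivity. Qed.
Lemma tcl {A A' A'' B} (f : hom A A') (f' : hom A' A'') : (f' ∘ f) ⊠ id B = (f' ⊠ id B) ∘ (f ⊠ id B).
Proof. rewrite <- tensm_comp. nrm. reflexivity. Qed.
Lemma tcr {A B B' B''} (g : hom B B') (g' : hom B' B'') : id A ⊠ (g' ∘ g) = (id A ⊠ g') ∘ (id A ⊠ g).
Proof. rewrite <- tensm_comp. nrm. reflexivity. Qed.
Lemma xch {A A' B B'} (f : hom A A') (g : hom B B') : (f ⊠ id B') ∘ (id A ⊠ g) = (id A' ⊠ g) ∘ (f ⊠ id B).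
Proof. rewrite <- tens_lr, <- tens_rl. reflexivity. Qed.



Lemma ainv_nat {A A' B B' D D'} (f : hom A A') (g : hom B B') (h : hom D D') :
  alpha_inv MC A' B' D' ∘ (f ⊠ (g ⊠ h)) = ((f ⊠ g) ⊠ h) ∘ alpha_inv MC A B D.
Proof.
  rewrite <- (comp_idr (_ ∘ _)). rewrite <- (alpha_iso1 MC A B D). nrm.
  rwr (alpha_nat MC f g h). rewrite (alpha_iso2 MC). nrm. reflexivity.
Qed.
Lemma rinv_nat {A A'} (f : hom A A') : rho_inv MC A' ∘ f = (f ⊠ id Iu) ∘ rho_inv MC A.
Proof.
  rewrite <- (comp_idr (_ ∘ f)). rewrite <- (rho_iso1 MC A). nrm.
  rwr (rho_nat MC f). rewrite (rho_iso2 MC). nrm. reflexivity.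
Qed.
Lemma alpha_canc {A B D E} (a b : hom (A ⊗ (B ⊗ D)) E) : a ∘ alpha MC A B D = b ∘ alpha MC A B D -> a = b.
Proof.
  intro H. rewrite <- (comp_idr a), <- (comp_idr b), <- (alpha_iso1 MC A B D). nrm. rewrite H. reflexivity.
Qed.
Lemma idt_canc {A B} (f g : hom A B) : id Iu ⊠ f = id Iu ⊠ g -> f = g.
Proof.
  intro H. rewrite <- (comp_idr f), <- (comp_idr g), <- (lam_iso1 MC A). nrm.
  rwr (lam_nat MC f). rwr (lam_nat MC g). rewrite H. reflexivity.
Qed.
Lemma tid_canc {A B} (f g : hom A B) : f ⊠ id Iu = g ⊠ id Iu -> f = g.
Proof.
  intro H. rewrite <- (comp_idr f), <- (comp_idr g), <- (rho_iso1 MC A). nrm.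
  rwr (rho_nat MC f). rwr (rho_nat MC g). rewrite H. reflexivity.
Qed.

Lemma coh1 A B : (id A ⊠ rho MC B) ∘ alpha MC A B Iu = rho MC (A ⊗ B).
Proof.
  apply tid_canc. symmetry.
  assert (E : forall X, alpha MC A B X ∘ (rho MC (A ⊗ B) ⊠ id X)
     = alpha MC A B X ∘ (((id A ⊠ rho MC B) ∘ alpha MC A B Iu) ⊠ id X)).
  { intro X. rewrite <- (triangle MC (A ⊗ B) X). rewrite <- (tensm_id MC A B).
    nrm. rw (alpha_nat MC (id A) (id B) (lam MC X)). rw (pentagon MC A B Iu X).
    rwr (tcr (A:=A) (alpha MC B Iu X) (id B ⊠ lam MC X)).
    nrm. rewrite (triangle MC B X). rwr (alpha_nat MC (id A) (rho MC B) (id X)).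
    rwr (tcl (B:=X) (alpha MC A B Iu) (id A ⊠ rho MC B)). reflexivity. }
  rewrite <- (comp_idl (_ ⊠ _)). rewrite <- (comp_idl (((id A ⊠ rho MC B) ∘ alpha MC A B Iu) ⊠ id Iu)).
  rewrite <- (alpha_iso2 MC A B Iu). rewrite <- !comp_assoc. rewrite (E Iu). reflexivity.
Qed.

Lemma tiso_canc {A A' B E} (i : hom A A') (j : hom A' A) (Hij : i ∘ j = id A') (a b : hom (A' ⊗ B) E) :
  a ∘ (i ⊠ id B) = b ∘ (i ⊠ id B) -> a = b.
Proof.
  intro H. rewrite <- (comp_idr a), <- (comp_idr b), <- (tensm_id MC A' B), <- Hij, <- (comp_idl (id B)).
  rewrite tensm_comp. nrm. rewrite H. reflexivity.
Qed.

Lemma kelly A B : lam MC A ⊠ id B = lam MC (A ⊗ B) ∘ alpha MC Iu A B.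
Proof.
  apply idt_canc. apply alpha_canc. apply (tiso_canc _ _ (alpha_iso1 MC Iu Iu A)).
  rewrite tcr. nrm. rwr (pentagon MC Iu Iu A B). rw (triangle MC Iu (A ⊗ B)).
  rewrite <- (tensm_id MC A B). rwr (alpha_nat MC (rho MC Iu) (id A) (id B)).
  rwr (alpha_nat MC (id Iu) (lam MC A) (id B)). rwr (tcl (B:=B) (alpha MC Iu Iu A) (id Iu ⊠ lam MC A)).
  rewrite triangle. reflexivity.
Qed.

Lemma rho_tens A : rho MC (A ⊗ Iu) = rho MC A ⊠ id Iu.
Proof.
  rewrite <- (comp_idl (rho MC (A ⊗ Iu))), <- (rho_iso2 MC A). rewrite <- comp_assoc.
  rewrite <- (rho_nat MC (rho MC A)). nrm. rewrite rho_iso2. nrm. reflexivity.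
Qed.

Lemma lamI : lam MC Iu = rho MC Iu.
Proof.
  apply idt_canc. apply alpha_canc. rewrite triangle. rewrite coh1. symmetry. apply rho_tens.
Qed.

Lemma idtid A B : id A ⊠ id B = id (A ⊗ B).
Proof. apply tensm_id. Qed.

Lemma GA_nat {A A' X X' Y Y'} (a : hom A A') (x : hom X X') (y : hom Y Y') :
  GA_str M A' X' Y' ∘ ((a ⊠ Mf x) ⊠ y) = (a ⊠ Mf (x ⊠ y)) ∘ GA_str M A X Y.
Proof.
  unfold GA_str. nrm. rw (alpha_nat MC a (Mf x) y).
  rewrite <- (tensm_comp MC (a) (id A') (Mf x ⊠ y) (tau M X' Y')).
  rewrite <- (tensm_comp MC (id A) a (tau M X Y) (Mf (x ⊠ y))).
  rewrite (tau_nat M x y). nrm. reflexivity.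
Qed.

Lemma GA_assoc A X Y Z :
  (id A ⊠ Mf (alpha MC X Y Z)) ∘ GA_str M A (X ⊗ Y) Z ∘ (GA_str M A X Y ⊠ id Z)
  = GA_str M A X (Y ⊗ Z) ∘ alpha MC (A ⊗ Mo M X) Y Z.
Proof.
  unfold GA_str. rewrite tcl. nrm.
  rw (alpha_nat MC (id A) (tau M X Y) (id Z)).
  rwr (tcr (A:=A) (tau M (X ⊗ Y) Z) (Mf (alpha MC X Y Z))).
  rwr (tcr (A:=A) (tau M X Y ⊠ id Z) (Mf (alpha MC X Y Z) ∘ tau M (X ⊗ Y) Z)).
  nrm. rewrite <- (tau_assoc M X Y Z). rewrite tcr. nrm.
  rw (eq_sym (pentagon MC A (Mo M X) Y Z)). reflexivity.
Qed.

Lemma GA_assoc' A X Y Z :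
  GA_str M A (X ⊗ Y) Z ∘ (GA_str M A X Y ⊠ id Z) ∘ alpha_inv MC (A ⊗ Mo M X) Y Z
  = (id A ⊠ Mf (alpha_inv MC X Y Z)) ∘ GA_str M A X (Y ⊗ Z).
Proof.
  rewrite <- (comp_idl (GA_str M A (X ⊗ Y) Z)). rewrite <- (idtid A). rewrite <- (Mm_id M).
  rewrite <- (alpha_iso2 MC X Y Z). rewrite Mm_comp. rewrite tcr. nrm.
  rw (GA_assoc A X Y Z). nrm. rw (alpha_iso1 MC (A ⊗ Mo M X) Y Z). nrm. reflexivity.
Qed.

Section R.
Context (T : C -> C -> C)
        (cons : forall A X : C, hom (A ⊗ Mo M (T A X)) (T A X))
        (etaF : forall A X : C, hom X (T A X))
        (Hfree : AlgFree M T cons etaF) (Hstr : StronglyGenerated M T cons etaF).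
Local Notation fe := (free_ext M T cons etaF Hfree).
Local Notation se := (str_ext M T cons etaF Hstr).
Local Notation Ralg := (R_alg M T cons).

Lemma fe_eta A X D c f : fe A X D c f ∘ etaF A X = f.
Proof. unfold free_ext. destruct (constructive_indefinite_description _ _) as [h [[H1 H2] U]]. exact H1. Qed.
Lemma fe_cons A X D c f : fe A X D c f ∘ cons A X = c ∘ (id A ⊠ Mf (fe A X D c f)).
Proof. unfold free_ext. destruct (constructive_indefinite_description _ _) as [h [[H1 H2] U]]. exact H2. Qed.
Lemma fe_uniq A X D c f h : h ∘ etaF A X = f -> h ∘ cons A X = c ∘ (id A ⊠ Mf h) -> h = fe A X D c f.
Proof. intros E1 E2. unfold free_ext. destruct (constructive_indefinite_description _ _) as [k [[H1 H2] U]].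
  simpl. symmetry. apply U. split; assumption. Qed.
Lemma se_eta A X Y D c f : se A X Y D c f ∘ (etaF A X ⊠ id Y) = f.
Proof. unfold str_ext. destruct (constructive_indefinite_description _ _) as [h [[H1 H2] U]]. exact H1. Qed.
Lemma se_cons A X Y D c f : se A X Y D c f ∘ (cons A X ⊠ id Y)
   = c ∘ (id A ⊠ Mf (se A X Y D c f)) ∘ GA_str M A (T A X) Y.
Proof. unfold str_ext. destruct (constructive_indefinite_description _ _) as [h [[H1 H2] U]]. exact H2. Qed.
Lemma se_uniq A X Y D c f h : h ∘ (etaF A X ⊠ id Y) = f ->
   h ∘ (cons A X ⊠ id Y) = c ∘ (id A ⊠ Mf h) ∘ GA_str M A (T A X) Y -> h = se A X Y D c f.
Proof. intros E1 E2. unfold str_ext. destruct (constructive_indefinite_description _ _) as [k [[H1 H2] U]].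
  simpl. symmetry. apply U. split; assumption. Qed.
Lemma se_uniq2 (A X Y D : C) (c : hom (A ⊗ Mo M D) D) (h1 h2 : hom (T A X ⊗ Y) D) : h1 ∘ (etaF A X ⊠ id Y) = h2 ∘ (etaF A X ⊠ id Y) ->
   h1 ∘ (cons A X ⊠ id Y) = c ∘ (id A ⊠ Mf h1) ∘ GA_str M A (T A X) Y ->
   h2 ∘ (cons A X ⊠ id Y) = c ∘ (id A ⊠ Mf h2) ∘ GA_str M A (T A X) Y -> h1 = h2.
Proof. intros E1 E2 E3. rewrite (se_uniq A X Y D c _ h1 E1 E2). symmetry. apply se_uniq; auto. Qed.
Lemma fe_uniq2 (A X D : C) (c : hom (A ⊗ Mo M D) D) (h1 h2 : hom (T A X) D) : h1 ∘ etaF A X = h2 ∘ etaF A X ->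
   h1 ∘ cons A X = c ∘ (id A ⊠ Mf h1) -> h2 ∘ cons A X = c ∘ (id A ⊠ Mf h2) -> h1 = h2.
Proof. intros E1 E2 E3. rewrite (fe_uniq A X D c _ h1 E1 E2). symmetry. apply fe_uniq; auto. Qed.

Lemma Ralg_mu A Y : Ralg A Y ∘ (id A ⊠ mu M (Mo M (T A Y))) = Ralg A Y ∘ (id A ⊠ Mf (mu M (T A Y))).
Proof. unfold R_alg. nrm. rwr (tcr (A:=A) (mu M (Mo M (T A Y))) (mu M (T A Y))). rwr (tcr (A:=A) (Mf (mu M (T A Y))) (mu M (T A Y))). rewrite mu_assoc. reflexivity. Qed.



Lemma Ralg_def A Y : Ralg A Y = eta M (T A Y) ∘ cons A Y ∘ (id A ⊠ mu M (T A Y)).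
Proof. reflexivity. Qed.
Lemma mu_M_eta {X Y} (k : hom X (Mo M Y)) : mu M Y ∘ Mf k ∘ eta M X = k.
Proof. rewrite <- comp_assoc, eta_nat. nrm. rewrite mu_eta_l. nrm. reflexivity. Qed.
Lemma tMc {A X Y Z} (f : hom X Y) (g : hom Y Z) : id A ⊠ Mf (g ∘ f) = (id A ⊠ Mf g) ∘ (id A ⊠ Mf f).
Proof. rewrite Mm_comp. apply tcr. Qed.

Definition psi A := se A Iu (Mo M (T A Iu)) (Mo M (T A Iu)) (Ralg A Iu) (lam MC (Mo M (T A Iu))).

Lemma psi_eta A : psi A ∘ (etaF A Iu ⊠ id (Mo M (T A Iu))) = lam MC (Mo M (T A Iu)).
Proof. apply se_eta. Qed.
Lemma psi_cons A : psi A ∘ (cons A Iu ⊠ id (Mo M (T A Iu))) = Ralg A Iu ∘ (id A ⊠ Mf (psi A)) ∘ GA_str M A (T A Iu) (Mo M (T A Iu)).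
Proof. apply se_cons. Qed.
Lemma tauT_eta A X Y : tauT M T cons etaF Hstr A X Y ∘ (etaF A X ⊠ id Y) = etaF A (X ⊗ Y).
Proof. apply se_eta. Qed.
Lemma tauT_cons A X Y : tauT M T cons etaF Hstr A X Y ∘ (cons A X ⊠ id Y)
  = cons A (X ⊗ Y) ∘ (id A ⊠ Mf (tauT M T cons etaF Hstr A X Y)) ∘ GA_str M A (T A X) Y.
Proof. apply se_cons. Qed.

Lemma fm_eq A : frak_m M T cons etaF Hfree Hstr A = mu M (T A Iu) ∘ Mf (psi A) ∘ tau M (T A Iu) (Mo M (T A Iu)).
Proof.
  unfold frak_m, muR, Rmap, tauR, sharp.
  set (k1 := fe A (Mo M (T A Iu)) (Mo M (T A Iu)) (Ralg A Iu) (id (Mo M (T A Iu)))).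
  set (k2 := fe A (Iu ⊗ Mo M (T A Iu)) (Mo M (T A (Mo M (T A Iu)))) (Ralg A (Mo M (T A Iu))) (etaR M T etaF A (Mo M (T A Iu)) ∘ lam MC (Mo M (T A Iu)))).
  set (tT := tauT M T cons etaF Hstr A Iu (Mo M (T A Iu))).
  assert (K : mu M (T A Iu) ∘ Mf k1 ∘ k2 ∘ tT = psi A).
  { apply (se_uniq2 A Iu (Mo M (T A Iu)) (Mo M (T A Iu)) (Ralg A Iu)).
    - rewrite psi_eta. nrm. unfold tT. rw tauT_eta. unfold k2. rw fe_eta. unfold etaR. nrm.
      rw (mu_M_eta k1). unfold k1. rw fe_eta. nrm. reflexivity.
    - nrm. unfold tT. rw (tauT_cons A Iu (Mo M (T A Iu))). unfold k2. rw (fe_cons A (Iu ⊗ Mo M (T A Iu)) (Mo M (T A (Mo M (T A Iu))))). rewrite (Ralg_def A (Mo M (T A Iu))). nrm.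
      rw (mu_M_eta k1). unfold k1. rw (fe_cons A (Mo M (T A Iu)) (Mo M (T A Iu))). fold k1 k2 tT.
      rewrite !Mm_comp. rewrite !tcr. nrm.
      rwr (tcr (A:=A) (mu M (T A (Mo M (T A Iu)))) (Mf k1)). rewrite mu_nat. rewrite tcr. nrm.
      rw (Ralg_mu A Iu). reflexivity.
    - apply psi_cons. }
  rewrite <- K. unfold k1, k2, tT. rewrite !Mm_comp. nrm. rw (mu_nat M). rw (mu_assoc M (T A Iu)). reflexivity.
Qed.


Lemma tcr_rev {A B B' B''} (g : hom B B') (g' : hom B' B'') : (id A ⊠ g') ∘ (id A ⊠ g) = id A ⊠ (g' ∘ g).
Proof. symmetry; apply tcr. Qed.
Lemma tcl_rev {A A' A'' B} (f : hom A A') (f' : hom A' A'') : (f' ⊠ id B) ∘ (f ⊠ id B) = (f' ∘ f) ⊠ id B.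
Proof. symmetry; apply tcl. Qed.
Lemma Mrev {X Y Z} (f : hom X Y) (g : hom Y Z) : Mf g ∘ Mf f = Mf (g ∘ f).
Proof. symmetry; apply Mm_comp. Qed.

Lemma GA_natY A X Y Y' (y : hom Y Y') :
  GA_str M A X Y' ∘ (id (A ⊗ Mo M X) ⊠ y) = (id A ⊠ Mf (id X ⊠ y)) ∘ GA_str M A X Y.
Proof. rewrite <- (GA_nat (id A) (id X) y). rewrite Mm_id, tensm_id. reflexivity. Qed.

Local Notation R A := (Mo M (T A Iu)).
Local Notation uu A := (eta M (T A Iu) ∘ etaF A Iu).

Lemma lam_tI {A B} (f : hom A B) : lam MC B ∘ (id Iu ⊠ f) = f ∘ lam MC A.
Proof. apply lam_nat. Qed.
Lemma rho_tI {A B} (f : hom A B) : rho MC B ∘ (f ⊠ id Iu) = f ∘ rho MC A.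
Proof. apply rho_nat. Qed.

Lemma psi_u A : psi A ∘ (id (T A Iu) ⊠ uu A) = eta M (T A Iu) ∘ rho MC (T A Iu).
Proof.
  apply (se_uniq2 A Iu Iu (R A) (Ralg A Iu)).
  - rwr (xch (etaF A Iu) (uu A)). rw psi_eta. rw (lam_tI (uu A)). rw (rho_tI (etaF A Iu)). rewrite lamI. reflexivity.
  - rwr (xch (cons A Iu) (uu A)). rw psi_cons. rw @GA_natY. repeat rw @tcr_rev. repeat rw @Mrev. reflexivity.
  - rw (rho_tI (cons A Iu)). rewrite Ralg_def. unfold GA_str. rewrite !Mm_comp. nrm. repeat rw @tcr_rev.
    rw mu_eta_r. nrm. rw tau_unit. rw coh1. reflexivity.
Qed.

Definition mm A := mu M (T A Iu) ∘ Mf (psi A) ∘ tau M (T A Iu) (R A).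

Lemma mm_compat A : mm A ∘ (mu M (T A Iu) ⊠ id (R A)) = mu M (T A Iu) ∘ Mf (mm A) ∘ tau M (R A) (R A).
Proof.
  unfold mm. rewrite !Mm_comp. nrm. rw tau_mu. rw (mu_nat M (psi A)). rw (mu_assoc M (T A Iu)). reflexivity.
Qed.

Lemma mm_unitl A : mm A ∘ (uu A ⊠ id (R A)) = lam MC (R A).
Proof.
  unfold mm. rewrite tcl. nrm. rw tau_eta. rw (eta_nat M (psi A)). rw mu_eta_l. nrm. apply psi_eta.
Qed.

Lemma mm_unitr A : mm A ∘ (id (R A) ⊠ uu A) = rho MC (R A).
Proof.
  unfold mm. rewrite <- (Mm_id M (T A Iu)). rwr (tau_nat M (id (T A Iu)) (uu A)).
  repeat rw @Mrev. rewrite psi_u. rewrite Mm_comp. nrm. rw mu_eta_r. nrm. apply tau_unit.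
Qed.


Lemma mm_eta A {X} (x : hom X (T A Iu)) : mm A ∘ ((eta M (T A Iu) ∘ x) ⊠ id (R A)) = psi A ∘ (x ⊠ id (R A)).
Proof. unfold mm. rewrite tcl. nrm. rw tau_eta. rw (eta_nat M (psi A)). rw mu_eta_l. nrm. reflexivity. Qed.

Lemma mm_Ralg A : mm A ∘ (Ralg A Iu ⊠ id (R A)) = Ralg A Iu ∘ (id A ⊠ Mf (mm A)) ∘ GA_str M A (R A) (R A).
Proof.
  assert (E : Ralg A Iu ⊠ id (R A) = (eta M (T A Iu) ∘ (cons A Iu ∘ (id A ⊠ mu M (T A Iu)))) ⊠ id (R A))
    by (rewrite Ralg_def; nrm; reflexivity).
  rewrite E. rewrite mm_eta. rewrite tcl. nrm. rw psi_cons. unfold GA_str. nrm.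
  rw (alpha_nat MC (id A) (mu M (T A Iu)) (id (R A))). repeat rw @tcr_rev.
  rw tau_mu. rw (mu_nat M (psi A)). rewrite !tcr. nrm. rw (Ralg_mu A Iu).
  unfold mm. rewrite !Mm_comp. repeat rw @tcr_rev. reflexivity.
Qed.


Lemma tau_assoc' X Y Z :
  tau M (X ⊗ Y) Z ∘ (tau M X Y ⊠ id Z) = Mf (alpha_inv MC X Y Z) ∘ tau M X (Y ⊗ Z) ∘ alpha MC (Mo M X) Y Z.
Proof.
  rewrite <- comp_assoc, tau_assoc. nrm. rewrite <- Mm_comp, alpha_iso2, Mm_id. nrm. reflexivity.
Qed.

Lemma Phi A : mm A ∘ (psi A ⊠ id (R A)) ∘ alpha_inv MC (T A Iu) (R A) (R A) = psi A ∘ (id (T A Iu) ⊠ mm A).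
Proof.
  set (f := mm A ∘ lam MC (R A ⊗ R A)).
  assert (E1 : mm A ∘ (psi A ⊠ id (R A)) ∘ alpha_inv MC (T A Iu) (R A) (R A)
     = se A Iu (R A ⊗ R A) (R A) (Ralg A Iu) f).
  { apply se_uniq.
    - rewrite <- (tensm_id MC (R A) (R A)). rw (ainv_nat (etaF A Iu) (id (R A)) (id (R A))).
      rw (tcl_rev (B:=R A) (etaF A Iu ⊠ id (R A)) (psi A)). rewrite psi_eta. rw kelly.
      rw (alpha_iso1 MC Iu (R A) (R A)). nrm. reflexivity.
    - rewrite <- (tensm_id MC (R A) (R A)). rw (ainv_nat (cons A Iu) (id (R A)) (id (R A))).
      rw (tcl_rev (B:=R A) (cons A Iu ⊠ id (R A)) (psi A)). rewrite psi_cons. rewrite !tcl. nrm.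
      rw (mm_Ralg A). rw (GA_nat (id A) (psi A) (id (R A))). rw GA_assoc'.
      rewrite !Mm_comp. rewrite !tcr. nrm. reflexivity. }
  assert (E2 : psi A ∘ (id (T A Iu) ⊠ mm A) = se A Iu (R A ⊗ R A) (R A) (Ralg A Iu) f).
  { apply se_uniq.
    - rwr (xch (etaF A Iu) (mm A)). rw psi_eta. rw (lam_tI (mm A)). reflexivity.
    - rwr (xch (cons A Iu) (mm A)). rw psi_cons. rw @GA_natY.
      rewrite !Mm_comp. rewrite !tcr. nrm. reflexivity. }
  rewrite E1, E2. reflexivity.
Qed.

Lemma mm_assoc A : mm A ∘ (mm A ⊠ id (R A)) = mm A ∘ (id (R A) ⊠ mm A) ∘ alpha MC (R A) (R A) (R A).
Proof.
  assert (E : mm A ⊠ id (R A) = (mu M (T A Iu) ∘ Mf (psi A) ∘ tau M (T A Iu) (R A)) ⊠ id (R A)) by reflexivity.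
  rewrite E. rewrite !tcl. nrm. rw (mm_compat A). rwr (tau_nat M (psi A) (id (R A))).
  rw tau_assoc'. repeat rw @Mrev. rewrite Phi.
  unfold mm at 2. rewrite <- (Mm_id M (T A Iu)). nrm. rwr (tau_nat M (id (T A Iu)) (mm A)).
  unfold mm. repeat rw @Mrev. nrm. reflexivity.
Qed.


Lemma tensm_comp_rev {A A' A'' B B' B''} (f : hom A A') (f' : hom A' A'') (g : hom B B') (g' : hom B' B'') :
  (f' ⊠ g') ∘ (f ⊠ g) = (f' ∘ f) ⊠ (g' ∘ g).
Proof. symmetry; apply tensm_comp. Qed.
Lemma tsplit1 {A A' A'' B B'} (a : hom A' A'') (b : hom A A') (c : hom B B') :
  (a ∘ b) ⊠ c = (a ⊠ id B') ∘ (b ⊠ c).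
Proof. rewrite <- tensm_comp. nrm. reflexivity. Qed.
Ltac mergeT := repeat (rw @tensm_comp_rev; nrm); nrm.

Local Notation tf := (t_f M T cons etaF Hfree).

Lemma tf_eta A B f : tf A B f ∘ etaF A Iu = etaF B Iu.
Proof. apply fe_eta. Qed.
Lemma tf_cons A B f : tf A B f ∘ cons A Iu = cons B Iu ∘ (f ⊠ id (Mo M (T B Iu))) ∘ (id A ⊠ Mf (tf A B f)).
Proof. apply fe_cons. Qed.
Lemma tf_id A : tf A A (id A) = id (T A Iu).
Proof.
  symmetry. apply fe_uniq.
  - nrm. reflexivity.
  - rewrite Mm_id, !tensm_id. nrm. reflexivity.
Qed.
Lemma tf_comp A B D (f : hom A B) (g : hom B D) : tf A D (g ∘ f) = tf B D g ∘ tf A B f.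
Proof.
  symmetry. apply fe_uniq.
  - rw tf_eta. apply tf_eta.
  - rw tf_cons. rw tf_cons. rewrite Mm_comp. mergeT. reflexivity.
Qed.

Lemma tu A B f : Mf (tf A B f) ∘ uu A = uu B.
Proof. nrm. rw eta_nat. rw tf_eta. reflexivity. Qed.

Lemma tRalg A B f : Mf (tf A B f) ∘ Ralg A Iu = Ralg B Iu ∘ (f ⊠ id (Mo M (R B))) ∘ (id A ⊠ Mf (Mf (tf A B f))).
Proof.
  rewrite !Ralg_def. nrm. rw eta_nat. rw tf_cons. mergeT. rw (mu_nat M (tf A B f)). reflexivity.
Qed.

Lemma psi_nat A B f : Mf (tf A B f) ∘ psi A = psi B ∘ (tf A B f ⊠ Mf (tf A B f)).
Proof.
  apply (se_uniq2 A Iu (R A) (R B) (Ralg B Iu ∘ (f ⊠ id (Mo M (R B))))).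
  - rw psi_eta. mergeT. rw tf_eta. rewrite tens_lr. nrm. rw psi_eta. rw @lam_tI. reflexivity.
  - rw psi_cons. rw tRalg. rewrite !Mm_comp. mergeT. reflexivity.
  - mergeT. rw tf_cons. rewrite !tsplit1. nrm. rw psi_cons. mergeT.
    rw (GA_nat f (tf A B f) (Mf (tf A B f))). rewrite !Mm_comp. mergeT. reflexivity.
Qed.

Lemma mm_nat A B f : Mf (tf A B f) ∘ mm A = mm B ∘ (Mf (tf A B f) ⊠ Mf (tf A B f)).
Proof.
  unfold mm. nrm. rw (mu_nat M (tf A B f)). repeat rw @Mrev. rewrite psi_nat.
  rwr (tau_nat M (tf A B f) (Mf (tf A B f))). repeat rw @Mrev. reflexivity.
Qed.


Definition unitA A : hom A (R A) := eta M (T A Iu) ∘ cons A Iu ∘ (id A ⊠ uu A) ∘ rho_inv MC A.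

Lemma unit_nat A B f : Mf (tf A B f) ∘ unitA A = unitA B ∘ f.
Proof.
  unfold unitA. nrm. rw eta_nat. rw tf_cons. rwr (tcr (A:=A) (uu A) (Mf (tf A B f))). nrm. rw eta_nat. rw tf_eta.
  rw (rinv_nat f). rwr (xch f (uu B)). reflexivity.
Qed.

Lemma cons_unit A : mm A ∘ (unitA A ⊠ id (R A)) = eta M (T A Iu) ∘ cons A Iu.
Proof.
  assert (E : unitA A ⊠ id (R A) = (eta M (T A Iu) ∘ (cons A Iu ∘ (id A ⊠ uu A) ∘ rho_inv MC A)) ⊠ id (R A))
    by (unfold unitA; nrm; reflexivity).
  rewrite E, mm_eta. rewrite !tcl. nrm. rw psi_cons. rwr (eta_nat M (etaF A Iu)). rewrite tcr, tcl. nrm.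
  rw (GA_nat (id A) (etaF A Iu) (id (R A))). mergeT. rewrite <- Mm_comp. rewrite psi_eta. rewrite tcl.
  unfold GA_str. nrm. rw (alpha_nat MC (id A) (eta M Iu) (id (R A))). mergeT. rw tau_eta. rw eta_nat.
  rewrite tcr. nrm. rw triangle. rw @tcl_rev. rw rho_iso1. rewrite tensm_id. nrm.
  rewrite Ralg_def. nrm. rw @tcr_rev. rewrite mu_eta_l, tensm_id. nrm. reflexivity.
Qed.


Section U.
Context (A Y : C) (b : hom (Mo M Y) Y) (n : hom (Y ⊗ Y) Y) (v : hom Iu Y) (g : hom A Y).
Hypothesis B1 : b ∘ eta M Y = id Y.
Hypothesis B2 : b ∘ Mf b = b ∘ mu M Y.
Hypothesis N1 : n ∘ (n ⊠ id Y) = n ∘ (id Y ⊠ n) ∘ alpha MC Y Y Y.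
Hypothesis N2 : n ∘ (v ⊠ id Y) = lam MC Y.
Hypothesis N3 : n ∘ (id Y ⊠ v) = rho MC Y.
Hypothesis N4 : n ∘ (b ⊠ id Y) = b ∘ Mf n ∘ tau M Y Y.

Definition cc := n ∘ (g ⊠ b).
Definition kk := fe A Iu Y cc v.
Definition hh := b ∘ Mf kk.

Lemma NB {X Z} (p : hom X Y) (q : hom Z Y) : n ∘ ((b ∘ Mf p) ⊠ q) = b ∘ Mf (n ∘ (p ⊠ q)) ∘ tau M X Z.
Proof. rewrite tsplit1. nrm. rw N4. rewrite Mm_comp. nrm. rwr (tau_nat M p q). reflexivity. Qed.

Lemma h_alg : hh ∘ mu M (T A Iu) = b ∘ Mf hh.
Proof. unfold hh. nrm. rw (mu_nat M kk). rwr B2. rewrite Mm_comp. nrm. reflexivity. Qed.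

Lemma h_psi : hh ∘ psi A = n ∘ (kk ⊠ hh).
Proof.
  apply (se_uniq2 A Iu (R A) Y cc).
  - rw psi_eta. mergeT. unfold kk at 1. rw fe_eta. rewrite tens_lr. nrm. rw N2. rw @lam_tI. reflexivity.
  - rw psi_cons. unfold hh. rewrite Ralg_def. nrm. rw eta_nat. rw B1. nrm. unfold kk at 1. rw fe_cons. fold kk.
    unfold cc. mergeT. rw (mu_nat M kk). rwr B2. rewrite !Mm_comp. mergeT. reflexivity.
  - mergeT. unfold kk at 1. rw fe_cons. fold kk. unfold cc. rewrite !tsplit1. nrm. rw N1. mergeT.
    rw (alpha_nat MC g (b ∘ Mf kk) hh). mergeT. rewrite NB. unfold GA_str. mergeT. rw @tensm_comp_rev. nrm. reflexivity.
Qed.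



Lemma h_mult : hh ∘ mm A = n ∘ (hh ⊠ hh).
Proof.
  unfold mm. nrm. rw h_alg. repeat rw @Mrev. rewrite h_psi.
  assert (E : hh ⊠ hh = (b ∘ Mf kk) ⊠ hh) by reflexivity. rewrite E, NB. reflexivity.
Qed.

Lemma h_unit : hh ∘ uu A = v.
Proof. unfold hh. nrm. rw eta_nat. rw B1. nrm. apply fe_eta. Qed.

Lemma h_g : hh ∘ unitA A = g.
Proof.
  unfold hh, unitA. nrm. rw eta_nat. rw B1. nrm. unfold kk at 1. rw fe_cons. fold kk. unfold cc. mergeT.
  assert (E : b ∘ Mf kk ∘ eta M (T A Iu) ∘ etaF A Iu = v).
  { rw eta_nat. rw B1. nrm. apply fe_eta. }
  rewrite E. rewrite tens_rl. nrm. rw N3. rw (rho_tI g). rw (rho_iso1 MC A). nrm. reflexivity.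
Qed.

Lemma h_uniq (h' : hom (R A) Y) : h' ∘ mu M (T A Iu) = b ∘ Mf h' -> h' ∘ mm A = n ∘ (h' ⊠ h') ->
  h' ∘ uu A = v -> h' ∘ unitA A = g -> h' = hh.
Proof.
  intros H1 H2 H3 H4.
  assert (K : h' ∘ eta M (T A Iu) = kk).
  { apply fe_uniq.
    - rewrite <- comp_assoc. exact H3.
    - rwr (cons_unit A). rw H2. mergeT. rewrite H4. unfold cc. mergeT.
      rewrite Mm_comp. nrm. rwr H1. rw mu_eta_r. nrm. reflexivity. }
  unfold hh. rewrite <- K. rewrite Mm_comp. nrm. rwr H1. rw mu_eta_r. nrm. reflexivity.
Qed.
End U.


Lemma main : LeftAdjointToU M
    (fun A => Mo M (T A (unitI MC)))
    (fun A => mu M (T A (unitI MC)))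
    (fun A => frak_m M T cons etaF Hfree Hstr A)
    (fun A => frak_u M T etaF A)
    (fun A B f => Mm M (t_f M T cons etaF Hfree A B f)).
Proof.
  unfold LeftAdjointToU. split; [| split; [| split; [| split]]].
  - intro A. unfold is_EMMonoid. rewrite fm_eq. fold (mm A). unfold frak_u, etaR.
    split; [apply mu_eta_l | split; [apply mu_assoc | split; [apply mm_assoc | split; [apply mm_unitl | split; [apply mm_unitr | apply mm_compat]]]]].
  - intros A B f. unfold is_EMMon_hom. rewrite !fm_eq. fold (mm A) (mm B). unfold frak_u, etaR.
    split; [apply mu_nat | split; [apply mm_nat | apply tu]].
  - intro A. simpl. rewrite tf_id. apply Mm_id.
  - intros A B D f g. simpl. rewrite tf_comp. apply Mm_comp.
  - exists unitA. split.
    + intros A B f. apply unit_nat.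
    + intros A Y b n v HY g. destruct HY as (B1 & B2 & N1 & N2 & N3 & N4).
      exists (hh A Y b n v g). split.
      * unfold is_EMMon_hom. rewrite fm_eq. fold (mm A). unfold frak_u, etaR.
        split; [split; [apply h_alg; auto | split; [apply h_mult; auto | apply h_unit; auto]] | apply h_g; auto].
      * intros h' [[H1 [H2 H3]] H4]. rewrite fm_eq in H2. fold (mm A) in H2. unfold frak_u, etaR in H3.
        symmetry. apply h_uniq; auto.
Qed.
End R.
End S.

Theorem theorem11 (C : Cat) (MC : Monoidal C) (M : StrongMonad MC)
    (T : C -> C -> C)
    (cons : forall A X : C, hom (tens MC A (Mo M (T A X))) (T A X))
    (etaF : forall A X : C, hom X (T A X))
    (Hfree : AlgFree M T cons etaF) (Hstr : StronglyGenerated M T cons etaF) :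
  LeftAdjointToU M
    (fun A => Mo M (T A (unitI MC)))
    (fun A => mu M (T A (unitI MC)))
    (fun A => frak_m M T cons etaF Hfree Hstr A)
    (fun A => frak_u M T etaF A)
    (fun A B f => Mm M (t_f M T cons etaF Hfree A B f)).
Proof. exact (main M T cons etaF Hfree Hstr). Qed.
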